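(* Let $G$ be a connected graph cellularly embedded on an orientable closed surface of genus $h\geq 0$. If $G$ has an even number of edges and has a perfect matching, then the total resonance graph $R_t(G)$ is bipartite.
   Context: A perfect matching of $G$ is a set of edges covering every vertex exactly once. A face of the embedding whose boundary is a cycle is said to have a facial cycle. The total resonance graph $R_t(G)$ has as vertices the perfect matchings of $G$, and two perfect matchings $M_1,M_2$ are adjacent if and only if the symmetric difference $M_1\oplus M_2=(M_1\setminus M_2)\cup(M_2\setminus M_1)$ is exactly the edge set of one facial cycle of $G$ (i.e. $M_2$ is obtained from $M_1$ by rotating along an $M_1$-alternating facial cycle). *)

(* Defs.v *)
(* A connected graph cellularly embedded on a closed
   orientable surface is encoded (Heffter-Edmonds) by a combinatorial map /
   rotation system on a finite set of darts D:
     alpha : fixed-point-free involution (its orbits = edges),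
     sigma : permutation (its orbits = vertices, cyclic order = rotation),
   faces = orbits of phi := sigma \o alpha.  The genus h of the surface is
   determined by Euler's formula and ranges over all h >= 0. *)
From mathcomp Require Import all_boot fingroup perm.
Set Implicit Arguments. Unset Strict Implicit. Unset Printing Implicit Defensive.

Section Maps.
Variable D : finType.
Variables alpha sigma : {perm D}.

Definition is_rotation_system : Prop :=
  forall d : D, alpha (alpha d) = d /\ alpha d != d.

Definition phi (d : D) : D := sigma (alpha d).

Definition same_vertex (x y : D) : bool := fconnect sigma x y.

Definition map_connected : Prop :=
  forall x y : D, connect (fun u v => (v == alpha u) || (v == sigma u)) x y.

Definition edges : {set {set D}} := [set [set d; alpha d] | d : D].

(* A set of edges is represented by the alpha-closed set of its darts.
   A perfect matching: each vertex is incident with exactly one dart of M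
   (a loop would contribute two darts, so loops never occur in a PM). *)
Definition perfect_matching (M : {set D}) : Prop :=
  (forall d, (d \in M) = (alpha d \in M)) /\
  (forall x : D, #|[set y in M | same_vertex x y]| = 1).

Definition face (f : D) : {set D} := [set y | fconnect phi f y].

Definition facial_cycle (f : D) : Prop :=
  (forall x y, x \in face f -> y \in face f -> same_vertex x y -> x = y) /\
  (forall x, x \in face f -> alpha x \notin face f).

Definition face_edges (f : D) : {set D} := face f :|: [set alpha x | x in face f].

Definition symdiff (A B : {set D}) : {set D} := (A :\: B) :|: (B :\: A).

Definition Rt_adj (M1 M2 : {set D}) : Prop :=
  perfect_matching M1 /\ perfect_matching M2 /\
  exists f : D, facial_cycle f /\ symdiff M1 M2 = face_edges f.

Definition Rt_bipartite : Prop :=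
  exists c : {set D} -> bool, forall M1 M2, Rt_adj M1 M2 -> c M1 != c M2.

End Maps.

(* Main.v *)
Require Import Defs.
From mathcomp Require Import all_boot fingroup perm.
From mathcomp Require Import all_algebra.
From Stdlib Require Import ClassicalEpsilon.
Set Implicit Arguments. Unset Strict Implicit. Unset Printing Implicit Defensive.
Import GRing.Theory.

Local Open Scope ring_scope.

Lemma F2_cases (a : 'F_2) : a = 0 \/ a = 1.
Proof. case: a => [[|[|k]] h]; [left|right|by []]; exact: val_inj. Qed.
Lemma F2_double (a : 'F_2) : a + a = 0.
Proof. by case: (F2_cases a) => ->; apply: val_inj. Qed.
Lemma F2_add_eq0 (a b : 'F_2) : a + b = 0 -> a = b.
Proof. by case: (F2_cases a) => ->; case: (F2_cases b) => -> // /eqP. Qed.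
Lemma F2_even n : ~~ odd n -> (n%:R : 'F_2) = 0.
Proof. move=> h. rewrite -Fp_nat_mod //. rewrite modn2 (negbTE h). by []. Qed.

Lemma fredholm (F : fieldType) m n (A : 'M[F]_(m,n)) (b : 'cV[F]_m) :
  (forall y : 'rV_m, y *m A = 0 -> y *m b = 0) -> exists x : 'cV_n, A *m x = b.
Proof.
move=> H.
set K := kermx A.
have Kb : K *m b = 0.
  apply/row_matrixP => i; rewrite row_mul row0; apply: H.
  by rewrite -row_mul mulmx_ker row0.
have sub1 : (A^T <= kermx K^T)%MS by apply/sub_kermxP; rewrite -trmx_mul mulmx_ker trmx0.
have sub2 : (b^T <= kermx K^T)%MS by apply/sub_kermxP; rewrite -trmx_mul Kb trmx0.
have eq : (A^T == kermx K^T)%MS.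
  rewrite -(mxrank_leqif_eq sub1) mxrank_tr mxrank_ker mxrank_tr mxrank_ker.
  by rewrite subKn // rank_leq_row.
have : (b^T <= A^T)%MS by rewrite (eqmxP eq).
case/submxP => Dm hD; exists Dm^T.
by rewrite -[b]trmxK hD trmx_mul trmxK.
Qed.

Section S.
Variable D : finType.
Variables alpha sigma : {perm D}.
Hypothesis Ha : is_rotation_system alpha.

Let phiP := (alpha * sigma)%g.
Let phiPE x : phiP x = phi alpha sigma x.
Proof. by rewrite /phiP permM. Qed.

Let alphaK x : alpha (alpha x) = x.
Proof. exact: (Ha x).1. Qed.

Lemma fconnect_porbit (s : {perm D}) x y : fconnect s x y = (y \in porbit s x).
Proof.
apply/idP/porbitP => [h | [i ->]].
  by exists (findex s x y); rewrite permX iter_findex.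
by rewrite permX fconnect_iter.
Qed.

Let face_porbit f : face alpha sigma f = porbit phiP f.
Proof.
apply/setP => y; rewrite inE -fconnect_porbit; apply: eq_fconnect => z.
by rewrite phiPE.
Qed.

Let mem_face_sym x y : (y \in face alpha sigma x) = (x \in face alpha sigma y).
Proof. by rewrite !face_porbit porbit_sym. Qed.

Let face_eq x y : y \in face alpha sigma x -> face alpha sigma y = face alpha sigma x.
Proof. by rewrite !face_porbit => h; apply/eqP; rewrite eq_porbit_mem. Qed.

Let face_id x : x \in face alpha sigma x.
Proof. by rewrite face_porbit porbit_id. Qed.

Let face_phi x : face alpha sigma (phi alpha sigma x) = face alpha sigma x.
Proof.
apply: face_eq; rewrite face_porbit -phiPE -{1}(expg1 phiP). exact: mem_porbit.
Qed.

Definition facb x : bool :=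
  if excluded_middle_informative (facial_cycle alpha sigma x) then true else false.

Lemma facbP x : reflect (facial_cycle alpha sigma x) (facb x).
Proof. by rewrite /facb; case: excluded_middle_informative => h; constructor. Qed.

Let facb_eq x y : face alpha sigma x = face alpha sigma y -> facb x = facb y.
Proof.
move=> e; apply/idP/idP => /facbP h; apply/facbP; move: h; by rewrite /facial_cycle e.
Qed.

Let mem_face_edges d x :
  (x \in face_edges alpha sigma d) =
  (d \in face alpha sigma x) || (d \in face alpha sigma (alpha x)).
Proof.
rewrite /face_edges inE; congr orb; first exact: mem_face_sym.
apply/imsetP/idP => [[z zin ->]|h].
  by rewrite alphaK -mem_face_sym.
by exists (alpha x); [rewrite mem_face_sym | rewrite alphaK].
Qed.

Section Core.
Variable Y : D -> 'F_2.
Hypothesis HY : forall x,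
  \sum_d Y d * (facb d && (x \in face_edges alpha sigma d))%:R = 0.
Hypothesis Hc : map_connected alpha sigma.

Let g d := Y d * (facb d)%:R.
Let m x := \sum_(d in face alpha sigma x) g d.

Let m_alpha x : m (alpha x) = m x.
Proof.
have e : \sum_d Y d * (facb d && (x \in face_edges alpha sigma d))%:R =
   \sum_(d | (d \in face alpha sigma x) || (d \in face alpha sigma (alpha x))) g d.
  rewrite [RHS]big_mkcond; apply: eq_bigr => d _; rewrite mem_face_edges /g.
  by case: facb; case: (_ || _); rewrite /= ?mulr0 ?mulr1.
case: (boolP (alpha x \in face alpha sigma x)) => hax.
  by rewrite /m (face_eq hax).
have HYx := HY x; rewrite e in HYx.
have disj : forall d, d \in face alpha sigma x -> d \in face alpha sigma (alpha x) -> False.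
  move=> d h1 h2.
  move: hax; rewrite -(face_eq h1) (face_eq h2).
  by rewrite face_id.
have : m x + m (alpha x) = 0.
  rewrite -HYx (bigID (fun d => d \in face alpha sigma x)) /=.
  congr (_ + _); apply: eq_bigl => d.
    by case: (d \in face alpha sigma x); rewrite /= ?andbT ?andbF ?orbT.
  case h1: (d \in face alpha sigma x); rewrite /= ?andbT ?andbF //.
  by apply/negP => h2; apply: (disj d).
by move/F2_add_eq0 ->.
Qed.

Let m_phi x : m (phi alpha sigma x) = m x.
Proof. by rewrite /m face_phi. Qed.

Let m_const x y : m x = m y.
Proof.
have := Hc y x.
have cl : closed (fun u v => (v == alpha u) || (v == sigma u)) [pred u | m u == m y].
  move=> u v /orP[/eqP->|/eqP->]; rewrite !inE.
    by rewrite m_alpha.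
  have -> : sigma u = phi alpha sigma (alpha u) by rewrite /phi alphaK.
  by rewrite m_phi m_alpha.
move/(closed_connect cl); rewrite !inE eqxx => /esym/eqP.
by [].
Qed.

Lemma core_sum (x0 : D) : \sum_d g d = (m x0) *+ #|porbits phiP|.
Proof.
have -> : \sum_d g d = \sum_(d in [set: D]) g d by apply: eq_bigl => d; rewrite in_setT.
rewrite (partition_big_imset (porbit phiP)).
have -> : porbit phiP @: [set: D] = porbits phiP.
  by apply/setP => O; apply/imsetP/imsetP => -[x _ ->]; exists x.
rewrite -sumr_const; apply: eq_bigr => O /imsetP[r _ ->].
rewrite -(m_const r x0) /m; apply: eq_bigl => d.
by rewrite in_setT /= eq_porbit_mem face_porbit.
Qed.

End Core.

Lemma even_closed (A : {set D}) :
  (forall d, (d \in A) = (alpha d \in A)) -> ~~ odd #|A|.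
Proof.
have [n le] : exists n, (#|A| <= n)%N by exists #|A|.
elim: n A le => [|n IH] A le cl.
  by move: le; rewrite leqn0 => /eqP ->.
case: (set_0Vmem A) => [->|[d dA]]; first by rewrite cards0.
set A' := A :\ d :\ alpha d.
have ad : alpha d != d by exact: (Ha d).2.
have cA : #|A| = (#|A'| + 2)%N.
  rewrite (cardsD1 d A) dA (cardsD1 (alpha d) (A :\ d)) !inE ad -cl dA.
  by rewrite -/A' /= add1n add1n addn2.
have cl' : forall z, (z \in A') = (alpha z \in A').
  move=> z; rewrite !inE -cl (inj_eq perm_inj).
  have -> : (alpha z == d) = (z == alpha d).
    by apply/eqP/eqP => [<-|->]; rewrite alphaK.
  by rewrite andbCA.
rewrite cA oddD /= addbF; apply: IH cl'.
by move: le; rewrite cA addn2 ltnS => /ltnW.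
Qed.

Lemma porbits_alpha : porbits alpha = edges alpha.
Proof.
rewrite /porbits /edges; apply: eq_imset => d.
apply/setP => y; rewrite !inE; apply/porbitP/idP => [[i ->]|/orP[/eqP->|/eqP->]].
  rewrite permX; elim: i => [|i IH]; first by rewrite eqxx.
  by rewrite iterS; case/orP: IH => /eqP ->; rewrite ?alphaK eqxx ?orbT.
  by exists 0%N; rewrite expg0 perm1.
by exists 1%N; rewrite expg1.
Qed.

Lemma pm_card (M : {set D}) : perfect_matching alpha sigma M ->
  #|porbits sigma| = #|M|.
Proof.
case=> _ hM.
have E : porbit sigma @: M = porbits sigma.
  apply/setP => O; apply/imsetP/imsetP => [[x _ ->]| [x _ ->]]; first by exists x.
  have /eqP/cards1P [z hz] := hM x.
  have : z \in [set y in M | same_vertex sigma x y] by rewrite hz set11.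
  rewrite inE => /andP[zM xz]; exists z => //.
  by apply/eqP; rewrite eq_porbit_mem porbit_sym -fconnect_porbit.
rewrite -E card_in_imset // => x y xM yM e.
have /eqP/cards1P [z hz] := hM x.
have hx : x \in [set y in M | same_vertex sigma x y].
  by rewrite inE xM /same_vertex connect0.
have hy : y \in [set y in M | same_vertex sigma x y].
  by rewrite inE yM /same_vertex fconnect_porbit e porbit_id.
by move: hx hy; rewrite hz !inE => /eqP -> /eqP ->.
Qed.

Lemma faces_even : ~~ odd #|edges alpha| ->
  (exists M, perfect_matching alpha sigma M) -> ~~ odd #|porbits phiP|.
Proof.
move=> hE [M hM].
have hD : ~~ odd #|D|.
  rewrite -cardsT; apply: even_closed => d; by rewrite !inE.
have hV : ~~ odd #|porbits sigma|.
  by rewrite (pm_card hM); apply: even_closed; case: hM.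
have := odd_permM alpha sigma; rewrite /odd_perm -/phiP porbits_alpha.
rewrite (negbTE hD) (negbTE hE) (negbTE hV) /= => ->; by [].
Qed.

End S.

Theorem theorem2p6 (D : finType) (alpha sigma : {perm D}) :
  is_rotation_system alpha -> map_connected alpha sigma ->
  ~~ odd #|edges alpha| ->
  (exists M : {set D}, perfect_matching alpha sigma M) ->
  Rt_bipartite alpha sigma.
Proof.
move=> Ha Hc hE hM.
have Fev := faces_even Ha hE hM.
pose A : 'M['F_2]_(#|D|, #|D|) := \matrix_(i, j)
  ((facb alpha sigma (enum_val i)) &&
   (enum_val j \in face_edges alpha sigma (enum_val i)))%:R.
pose b : 'cV['F_2]_#|D| := \col_i (facb alpha sigma (enum_val i))%:R.
have [x hx] : exists x, A *m x = b.
  apply: fredholm => y hy.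
  pose Y d := y 0 (enum_rank d).
  have HY : forall z, \sum_d Y d *
      (facb alpha sigma d && (z \in face_edges alpha sigma d))%:R = 0.
    move=> z; move/matrixP: hy => /(_ 0 (enum_rank z)); rewrite !mxE => h; rewrite -[X in _ = X]h.
    rewrite (reindex enum_rank) /=; last by apply: onW_bij; exact: enum_rank_bij.
    by apply: eq_bigr => d _; rewrite !mxE !enum_rankK.
  apply/matrixP => i j; rewrite !ord1 !mxE.
  rewrite (reindex enum_rank) /=; last by apply: onW_bij; exact: enum_rank_bij.
  have -> : \sum_j y 0 (enum_rank j) * b (enum_rank j) 0 =
      \sum_d Y d * (facb alpha sigma d)%:R.
    by apply: eq_bigr => d _; rewrite !mxE enum_rankK.
  case: (pickP (fun _ : D => true)) => [x0 _ | none].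
    by rewrite (core_sum Ha HY Hc x0) -mulr_natr F2_even // mulr0.
  by rewrite big_pred0.
pose X d := x (enum_rank d) 0.
exists (fun M : {set D} => \sum_(d in M) X d == 0).
move=> M1 M2 [pm1 [pm2 [f [ff hs]]]].
have hfb : facb alpha sigma f by apply/facbP.
have hf : \sum_(d in face_edges alpha sigma f) X d = 1.
  move/matrixP: hx => /(_ (enum_rank f) 0); rewrite !mxE enum_rankK hfb => h; rewrite -[X in _ = X]h.
  rewrite (reindex enum_rank) /=; last by apply: onW_bij; exact: enum_rank_bij.
  rewrite [LHS]big_mkcond; apply: eq_bigr => d _; rewrite !mxE !enum_rankK hfb /=.
  by case: (d \in _); rewrite ?mul1r ?mul0r.
have hsum : \sum_(d in M1) X d + \sum_(d in M2) X d = 1.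
  rewrite -hf -hs /symdiff big_mkcond [X in _ + X]big_mkcond [RHS]big_mkcond.
  rewrite -big_split; apply: eq_bigr => d _; rewrite !inE.
  by case: (d \in M1); case: (d \in M2); rewrite /= ?addr0 ?add0r ?F2_double.
move: hsum.
case: (F2_cases (\sum_(d in M1) X d)) => ->;
  case: (F2_cases (\sum_(d in M2) X d)) => -> //.
Qed.
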